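(* Fix $\alpha\in(0,1)$ and let $t=\lfloor K^{1+\alpha}\rfloor$. Then \[ \lim_{K\to\infty}\mathbb{P}\left(D_t<6K^{2\alpha}\right)=1. \]
   Context: Incremental construction. Fix an integer $K\ge2$, $[n]=\{1,\dots,n\}$. A random $K\times K$ matrix $\Psi$ is filled with $1,\dots,K^2$, the integer $s$ placed at step $s$. After step $t$, $R_t$, $C_t$ are the numbers of nonempty rows and columns (nonempty rows are $1,\dots,R_t$, nonempty columns $1,\dots,C_t$), and $M_t$ is the submatrix with rows $[R_t]$, columns $[C_t]$; $R_0=C_0=0$. Step 1: $\Psi(1,1)=1$ ($R_1=C_1=1$). For $t=1,\dots,K^2-1$, step $t+1$: with conditional probability $\rho_{t+1}=\frac{(K-R_t)K}{K^2-t}$ a new row is created ($R_{t+1}=R_t+1$), and independently with probability $\frac{K-C_t}{K}$ also a new column ($C_{t+1}=C_t+1$, $\Psi(R_{t+1},C_{t+1})=t+1$), otherwise $C_{t+1}=C_t$ and $\Psi(R_{t+1},Z)=t+1$ with $Z$ uniform in $[C_t]$. With probability $1-\rho_{t+1}$, no new row is created ($R_{t+1}=R_t$) and a uniformly random empty cell $(X,Y)$ among rows $[R_t]$ is chosen, generated by rejection sampling: cells are drawn independently and uniformly among the $R_tK$ cells of rows $[R_t]$ until an empty one is drawn; let $U_{t+1}=1$ if the first draw is empty and $U_{t+1}=0$ otherwise (so its conditional probability of being $1$ is $1-\frac{t}{R_tK}$). If $Y>C_t$ then $C_{t+1}=C_t+1$ and $\Psi(X,C_{t+1})=t+1$; otherwise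 $C_{t+1}=C_t$ and $\Psi(X,Y)=t+1$. Define $D_t$ as the number of steps $s\le t$ at which no new row is created and $U_s=0$. *)

(* Defs.v *)
From Stdlib Require Import Reals Lra Lia Arith List.
Import ListNotations.
Open Scope R_scope.

(* State of the incremental construction after some step:
   R_t, C_t, D_t and the filled cells of Psi as triples (row, column, value). *)
Record state := mkState { sR : nat; sC : nat; sD : nat; cells : list (nat * nat * nat) }.

Definition filled (s : state) (x y : nat) : bool :=
  existsb (fun c => match c with (a, b, _) => andb (Nat.eqb a x) (Nat.eqb b y) end) (cells s).

Definition empties (K : nat) (s : state) : list (nat * nat) :=
  filter (fun p => negb (filled s (fst p) (snd p)))
         (list_prod (seq 1 (sR s)) (seq 1 K)).

(* Transition kernel of step t+1, given the state after step t.
   In the "no new row" branch, the rejection sampling is encoded exactly by the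
   joint law of (U_{t+1}, (X,Y)):  P(U=1, (X,Y)=c) = 1/(R_t K) and
   P(U=0, (X,Y)=c) = 1/#empty - 1/(R_t K) for every empty cell c. *)
Definition step (K t : nat) (s : state) : list (R * state) :=
  let Rt := sR s in let Ct := sC s in let Dt := sD s in
  let rho := INR ((K - Rt) * K) / (INR (K * K) - INR t) in
  let pnc := INR (K - Ct) / INR K in
  let E := empties K s in
  [(rho * pnc, mkState (S Rt) (S Ct) Dt ((S Rt, S Ct, S t) :: cells s))]
  ++ map (fun z => (rho * (1 - pnc) * / INR Ct,
                    mkState (S Rt) Ct Dt ((S Rt, z, S t) :: cells s)))
         (seq 1 Ct)
  ++ flat_map (fun p =>
        let x := fst p in let y := snd p in
        let C' := if Nat.ltb Ct y then S Ct else Ct in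
        let col := if Nat.ltb Ct y then S Ct else y in
        [((1 - rho) * / INR (Rt * K),
          mkState Rt C' Dt ((x, col, S t) :: cells s));
         ((1 - rho) * (/ INR (length E) - / INR (Rt * K)),
          mkState Rt C' (S Dt) ((x, col, S t) :: cells s))])
       E.

Definition state0 : state := mkState 0 0 0 [].
Definition state1 : state := mkState 1 1 0 [(1%nat, 1%nat, 1%nat)].

Fixpoint dist (K n : nat) {struct n} : list (R * state) :=
  match n with
  | O => [(1%R, state0)]
  | S m =>
    match m with
    | O => [(1%R, state1)]
    | S _ => flat_map (fun ps : R * state => let (p, s) := ps in
                         map (fun qs : R * state => let (q, s') := qs in (p * q, s')) (step K m s))
                      (dist K m)
    end
  end.

Definition probD_lt (K n : nat) (b : R) : R :=
  fold_right Rplus 0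
    (map (fun ps : R * state => let (p, s) := ps in if Rlt_dec (INR (sD s)) b then p else 0)
         (dist K n)).

Definition tK (alpha : R) (K : nat) : nat :=
  Z.to_nat (Int_part (Rpower (INR K) (1 + alpha))).

(* Main.v *)
Require Import Defs.
From Stdlib Require Import Reals.
From Stdlib Require Import Lra Lia Arith List FinFun ZArith.
Import ListNotations.
Open Scope R_scope.


Definition Ex (g : state -> R) (L : list (R * state)) : R :=
  fold_right Rplus 0 (map (fun ps => fst ps * g (snd ps)) L).

Definition Inv (K n : nat) (s : state) : Prop :=
  (1 <= sR s <= K)%nat /\ (1 <= sC s <= K)%nat /\ length (cells s) = n /\
  NoDup (map fst (cells s)) /\
  (forall c, In c (cells s) -> (1 <= fst (fst c) <= sR s)%nat /\ (1 <= snd (fst c) <= sC s)%nat).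

Lemma filled_iff s x y : filled s x y = true <-> In (x, y) (map fst (cells s)).
Proof.
  unfold filled; rewrite existsb_exists; split.
  - intros [[[a b] v] [Hc Hf]]. apply andb_prop in Hf as [H1 H2].
    apply Nat.eqb_eq in H1; apply Nat.eqb_eq in H2; subst.
    apply in_map_iff; exists (x, y, v); auto.
  - intros H; apply in_map_iff in H as [[[a b] v] [E Hin]]; simpl in E.
    inversion E; subst. exists (x, y, v); split; auto. simpl; rewrite !Nat.eqb_refl; auto.
Qed.

Lemma NoDup_prod {A B : Type} (l : list A) (l' : list B) :
  NoDup l -> NoDup l' -> NoDup (list_prod l l').
Proof.
  induction l as [|a l IH]; intros H H'; simpl; [constructor|].
  inversion H; subst. apply NoDup_app.
  - apply FinFun.Injective_map_NoDup; auto. intros x y E; inversion E; auto.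
  - apply IH; auto.
  - intros p Hp Hq. apply in_map_iff in Hp as [y [E _]]. subst.
    apply in_prod_iff in Hq as [Ha _]. contradiction.
Qed.

Lemma empties_len K n s : Inv K n s ->
  (n <= sR s * K)%nat /\ length (empties K s) = (sR s * K - n)%nat.
Proof.
  intros (HR & HC & Hl & Hnd & Hb).
  set (P := list_prod (seq 1 (sR s)) (seq 1 K)).
  set (f := fun p : nat * nat => filled s (fst p) (snd p)).
  assert (E1 : length (empties K s) = length (filter (fun x => negb (f x)) P)) by reflexivity.
  pose proof (filter_length f P) as Hfl.
  assert (LP : length P = (sR s * K)%nat) by (unfold P; rewrite length_prod, !length_seq; auto).
  assert (NP : NoDup P) by (apply NoDup_prod; apply seq_NoDup).
  assert (I1 : incl (map fst (cells s)) (filter f P)).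
  { intros p Hp. apply filter_In. split.
    - apply in_map_iff in Hp as [c [Ec Hc]]. destruct (Hb c Hc). subst p.
      destruct c as [[a b] v]; simpl in *. unfold P; apply in_prod_iff; split; apply in_seq; lia.
    - unfold f; destruct p; apply filled_iff; auto. }
  assert (I2 : incl (filter f P) (map fst (cells s))).
  { intros p Hp. apply filter_In in Hp as [_ Hp]. unfold f in Hp; destruct p; apply filled_iff; auto. }
  pose proof (NoDup_incl_length Hnd I1) as L1.
  pose proof (NoDup_incl_length (NoDup_filter f NP) I2) as L2.
  rewrite length_map in L1, L2. lia.
Qed.

Lemma Ex_app g l1 l2 : Ex g (l1 ++ l2) = Ex g l1 + Ex g l2.
Proof. unfold Ex; rewrite map_app, fold_right_app. induction l1; simpl; [ring|]. simpl in IHl1; lra. Qed.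

Lemma Ex_cons g p l : Ex g (p :: l) = fst p * g (snd p) + Ex g l.
Proof. reflexivity. Qed.

Lemma Ex_nil g : Ex g [] = 0.
Proof. reflexivity. Qed.

Lemma Ex_map_const {A : Type} g (f : A -> R * state) l w v :
  (forall x, In x l -> fst (f x) = w /\ g (snd (f x)) = v) ->
  Ex g (map f l) = INR (length l) * w * v.
Proof.
  induction l as [|a l IH]; intros H; simpl map; [rewrite Ex_nil; simpl; ring|].
  rewrite Ex_cons, IH by (intros; apply H; simpl; auto).
  destruct (H a (or_introl eq_refl)) as [-> ->]. simpl length; rewrite S_INR; ring.
Qed.

Lemma Ex_flat_map_const {A : Type} g (f : A -> list (R * state)) l k :
  (forall x, In x l -> Ex g (f x) = k) ->
  Ex g (flat_map f l) = INR (length l) * k.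
Proof.
  induction l as [|a l IH]; intros H; simpl flat_map; [rewrite Ex_nil; simpl; ring|].
  rewrite Ex_app, IH by (intros; apply H; simpl; auto).
  rewrite (H a (or_introl eq_refl)). simpl length; rewrite S_INR; ring.
Qed.

Lemma step_Ex K m s (h : nat -> R) : (1 <= sC s)%nat ->
  let rho := INR ((K - sR s) * K) / (INR (K * K) - INR m) in
  let pnc := INR (K - sC s) / INR K in
  let e := INR (length (empties K s)) in
  let r := INR (sR s * K) in
  Ex (fun s => h (sD s)) (step K m s) =
  rho * pnc * h (sD s) + INR (sC s) * (rho * (1 - pnc) * / INR (sC s)) * h (sD s)
  + e * ((1 - rho) * / r * h (sD s) + (1 - rho) * (/ e - / r) * h (S (sD s))).
Proof.
  intros HC rho pnc e r. unfold step. rewrite !Ex_app.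
  rewrite (Ex_map_const _ _ _ (rho * (1 - pnc) * / INR (sC s)) (h (sD s))) by (intros; simpl; auto).
  rewrite length_seq.
  rewrite (Ex_flat_map_const _ _ _ ((1 - rho) * / r * h (sD s) + (1 - rho) * (/ e - / r) * h (S (sD s)))).
  - unfold Ex at 1; simpl. fold rho pnc e r. ring.
  - intros p _. unfold Ex; simpl. fold rho pnc e r. ring.
Qed.

Lemma Inv_add K m s R' C' D' x y v : Inv K m s ->
  (sR s <= R' <= K)%nat -> (sC s <= C' <= K)%nat -> (1 <= x <= R')%nat -> (1 <= y <= C')%nat ->
  ~ In (x, y) (map fst (cells s)) ->
  Inv K (S m) (mkState R' C' D' ((x, y, v) :: cells s)).
Proof.
  intros (HR & HC & Hl & Hnd & Hb) H1 H2 H3 H4 Hn.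
  unfold Inv; simpl. split; [lia|]. split; [lia|]. split; [lia|]. split.
  - constructor; auto.
  - intros c [<-|Hc]; simpl; [lia|]. destruct (Hb c Hc); lia.
Qed.

Lemma notin_row K m s x y : Inv K m s -> (sR s < x)%nat -> ~ In (x, y) (map fst (cells s)).
Proof.
  intros (HR & HC & Hl & Hnd & Hb) Hx Hin. apply in_map_iff in Hin as [c [E Hc]].
  destruct (Hb c Hc) as [H1 H2]. rewrite E in H1; simpl in H1; lia.
Qed.

Lemma notin_col K m s x y : Inv K m s -> (sC s < y)%nat -> ~ In (x, y) (map fst (cells s)).
Proof.
  intros (HR & HC & Hl & Hnd & Hb) Hx Hin. apply in_map_iff in Hin as [c [E Hc]].
  destruct (Hb c Hc) as [H1 H2]. rewrite E in H2; simpl in H2; lia.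
Qed.

Lemma Rdiv_le_0_compat x y : 0 <= x -> 0 < y -> 0 <= x / y.
Proof. intros; apply Rle_mult_inv_pos; auto. Qed.
Lemma Rdiv_le_1 x y : 0 < y -> x <= y -> x / y <= 1.
Proof. intros; apply (Rmult_le_reg_r y); auto. unfold Rdiv; rewrite Rmult_assoc, Rinv_l; lra. Qed.

Lemma step_props K m s : (1 <= K)%nat -> Inv K m s -> (m < K * K)%nat ->
  (forall qs, In qs (step K m s) -> 0 <= fst qs /\ (0 < fst qs -> Inv K (S m) (snd qs)))
  /\ Ex (fun _ => 1) (step K m s) = 1
  /\ Ex (fun s => exp (INR (sD s))) (step K m s)
     <= exp (INR (sD s)) * (1 + 2 * (INR m / (INR (K * K) - INR m))).
Proof.
  intros HK HI Hm.
  pose proof HI as (HR & HC & Hl & Hnd & Hb).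
  destruct (empties_len K m s HI) as [HmRK HE].
  pose proof (step_Ex K m s (fun _ => 1) (proj1 HC)) as EX1.
  pose proof (step_Ex K m s (fun d => exp (INR d)) (proj1 HC)) as EXe.
  cbv beta zeta in EX1, EXe.
  set (rho := INR ((K - sR s) * K) / (INR (K * K) - INR m)) in *.
  set (pnc := INR (K - sC s) / INR K) in *.
  set (e := INR (length (empties K s))) in *.
  set (r := INR (sR s * K)) in *.
  assert (eK : INR (K * K) = INR K * INR K) by apply mult_INR.
  assert (er : r = INR (sR s) * INR K) by apply mult_INR.
  assert (ee : e = INR (sR s) * INR K - INR m).
  { unfold e; rewrite HE, minus_INR, mult_INR by lia. auto. }
  assert (Kpos : 1 <= INR K) by (apply (le_INR 1); lia).
  assert (Rb : 1 <= INR (sR s) <= INR K) by (split; [apply (le_INR 1)| apply le_INR]; lia).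
  assert (Cb : 1 <= INR (sC s) <= INR K) by (split; [apply (le_INR 1)| apply le_INR]; lia).
  assert (mb : INR m <= INR (sR s) * INR K) by (rewrite <- mult_INR; apply le_INR; lia).
  assert (mb2 : INR m < INR K * INR K) by (rewrite <- mult_INR; apply lt_INR; lia).
  assert (m0 : 0 <= INR m) by apply pos_INR.
  assert (Dpos : 0 < INR (K * K) - INR m) by lra.
  assert (erho : rho = (INR K - INR (sR s)) * INR K / (INR (K * K) - INR m)).
  { unfold rho; rewrite mult_INR, minus_INR by lia. auto. }
  assert (e1rho : 1 - rho = (r - INR m) / (INR (K * K) - INR m)).
  { rewrite erho, er, eK; field; lra. }
  assert (rho0 : 0 <= rho).
  { rewrite erho. apply Rdiv_le_0_compat; [|lra]. apply Rmult_le_pos; lra. }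
  assert (rho1 : 0 <= 1 - rho).
  { rewrite e1rho. apply Rdiv_le_0_compat; lra. }
  assert (epnc : pnc = (INR K - INR (sC s)) / INR K).
  { unfold pnc; rewrite minus_INR by lia; auto. }
  assert (pnc0 : 0 <= pnc) by (rewrite epnc; apply Rdiv_le_0_compat; lra).
  assert (pnc1 : 0 <= 1 - pnc).
  { assert (1 - pnc = INR (sC s) / INR K) by (rewrite epnc; field; lra).
    rewrite H; apply Rdiv_le_0_compat; lra. }
  assert (rhoK : sR s = K -> rho = 0).
  { intros E; unfold rho; rewrite E, Nat.sub_diag; simpl. unfold Rdiv; ring. }
  assert (pncK : sC s = K -> pnc = 0).
  { intros E; unfold pnc; rewrite E, Nat.sub_diag; simpl. unfold Rdiv; ring. }
  assert (rpos : 0 < r) by (rewrite er; nra).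
  assert (Xterm : forall a b, e * ((1 - rho) * / r * a + (1 - rho) * (/ e - / r) * b)
                  = (1 - rho) * (e / r) * a + (1 - rho) * (1 - e / r) * b).
  { intros a b. destruct (Req_dec e 0) as [E0|E0].
    - assert (1 - rho = 0) by (rewrite e1rho; replace (r - INR m) with e by (rewrite ee, er; ring);
        rewrite E0; unfold Rdiv; ring).
      rewrite H, E0; ring.
    - field; lra. }
  split; [|split].
  - intros qs Hq. unfold step in Hq. fold rho pnc in Hq.
    apply in_app_iff in Hq as [Hq|Hq]; [|apply in_app_iff in Hq as [Hq|Hq]].
    + destruct Hq as [<-|[]]. simpl. split; [apply Rmult_le_pos; auto|].
      intros Hp.
      assert (sR s <> K) by (intros E; rewrite (rhoK E) in Hp; lra).
      assert (sC s <> K) by (intros E; rewrite (pncK E) in Hp; lra).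
      apply Inv_add; [exact HI|lia|lia|lia|lia|]. apply notin_row with K m; auto.
    + apply in_map_iff in Hq as [z [<- Hz]]. apply in_seq in Hz. simpl.
      split. { apply Rmult_le_pos; [apply Rmult_le_pos; auto|]. left; apply Rinv_0_lt_compat; lra. }
      intros Hp.
      assert (sR s <> K) by (intros E; rewrite (rhoK E) in Hp; lra).
      apply Inv_add; [exact HI|lia|lia|lia|lia|]. apply notin_row with K m; auto.
    + apply in_flat_map in Hq as [[x y] [Hp Hq]].
      assert (Hp' := Hp). unfold empties in Hp'. apply filter_In in Hp' as [Hp1 Hp2].
      apply in_prod_iff in Hp1 as [Hx Hy]. apply in_seq in Hx, Hy. simpl in Hx, Hy.
      assert (Hnf : ~ In (x, y) (map fst (cells s))).
      { intros Hin. apply filled_iff in Hin. simpl in Hp2. rewrite Hin in Hp2. discriminate. }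
      assert (e1 : 1 <= e).
      { unfold e. destruct (empties K s) as [|a l]; [destruct Hp|]. simpl length. rewrite S_INR.
        pose proof (pos_INR (length l)); lra. }
      assert (ele : e <= r) by (rewrite ee, er; lra).
      assert (Hinv : Inv K (S m) (mkState (sR s) (if Nat.ltb (sC s) y then S (sC s) else sC s) (sD s)
                    ((x, (if Nat.ltb (sC s) y then S (sC s) else y), S m) :: cells s))
                 /\ Inv K (S m) (mkState (sR s) (if Nat.ltb (sC s) y then S (sC s) else sC s) (S (sD s))
                    ((x, (if Nat.ltb (sC s) y then S (sC s) else y), S m) :: cells s))).
      { destruct (Nat.ltb (sC s) y) eqn:Ey.
        - apply Nat.ltb_lt in Ey. split; (apply Inv_add; [exact HI|lia|lia|lia|lia|]); apply notin_col with K m; auto.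
        - apply Nat.ltb_ge in Ey. split; (apply Inv_add; [exact HI|lia|lia|lia|lia|]); auto. }
      simpl in Hq. destruct Hq as [<-|[<-|[]]]; simpl; fold e r.
      * split; [|intros; apply Hinv]. apply Rmult_le_pos; auto. left; apply Rinv_0_lt_compat; lra.
      * split; [|intros; apply Hinv]. apply Rmult_le_pos; auto.
        assert (/ r <= / e) by (apply Rinv_le_contravar; lra). lra.
  - rewrite EX1, Xterm. field. lra.
  - rewrite EXe, Xterm. rewrite S_INR, exp_plus.
    set (E0 := exp (INR (sD s))).
    assert (E0p : 0 < E0) by apply exp_pos.
    assert (Eq : rho * pnc * E0 + INR (sC s) * (rho * (1 - pnc) * / INR (sC s)) * E0 +
      ((1 - rho) * (e / r) * E0 + (1 - rho) * (1 - e / r) * (E0 * exp 1))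
      = E0 * (1 + (exp 1 - 1) * ((INR m / (INR (K * K) - INR m)) * (1 - INR m / r)))).
    { assert (erho2 : rho = 1 - (r - INR m) / (INR (K * K) - INR m)) by lra.
      rewrite erho2, ee. rewrite er. field. split; [|split]; try lra. }
    rewrite Eq. apply Rmult_le_compat_l; [lra|].
    assert (q0 : 0 <= INR m / (INR (K * K) - INR m)) by (apply Rdiv_le_0_compat; lra).
    assert (q1 : 0 <= INR m / r) by (apply Rdiv_le_0_compat; lra).
    assert (q2 : INR m / r <= 1) by (apply Rdiv_le_1; lra).
    pose proof exp_le_3. assert (1 <= exp 1) by (pose proof (exp_ineq1_le 1); lra).
    set (q := INR m / (INR (K * K) - INR m)) in *.
    set (w := INR m / r) in *.
    assert (0 <= q * (1 - w) <= q) by (split; nra).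
    nra.
Qed.

Definition FS {A : Type} (f : A -> R) (L : list A) := fold_right Rplus 0 (map f L).

Lemma FS_le {A : Type} (f g : A -> R) L : (forall x, In x L -> f x <= g x) -> FS f L <= FS g L.
Proof.
  induction L as [|a L IH]; intros H; unfold FS; simpl; [lra|].
  apply Rplus_le_compat; [apply H; simpl; auto|apply IH; intros; apply H; simpl; auto].
Qed.

Lemma FS_eq {A : Type} (f g : A -> R) L : (forall x, In x L -> f x = g x) -> FS f L = FS g L.
Proof.
  intros H; apply Rle_antisym; apply FS_le; intros x Hx; rewrite (H x Hx); lra.
Qed.

Lemma FS_scale {A : Type} (f : A -> R) c L : FS (fun x => c * f x) L = c * FS f L.
Proof. induction L; unfold FS in *; simpl; [ring|]. rewrite IHL; ring. Qed.

Lemma Ex_FS g L : Ex g L = FS (fun ps => fst ps * g (snd ps)) L.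
Proof. reflexivity. Qed.

Lemma Ex_scale g p (l : list (R * state)) :
  Ex g (map (fun qs : R * state => let (q, s') := qs in (p * q, s')) l) = p * Ex g l.
Proof.
  induction l as [|[q s] l IH]; [unfold Ex; simpl; ring|].
  simpl map. rewrite !Ex_cons, IH. simpl. ring.
Qed.

Lemma Ex_bind K m g L :
  Ex g (flat_map (fun ps : R * state => let (p, s) := ps in
          map (fun qs : R * state => let (q, s') := qs in (p * q, s')) (step K m s)) L)
  = FS (fun ps => fst ps * Ex g (step K m (snd ps))) L.
Proof.
  induction L as [|[p s] L IH]; [reflexivity|].
  cbn [flat_map]. rewrite Ex_app, Ex_scale, IH. reflexivity.
Qed.

Lemma dist_props K N : (1 <= K)%nat -> (N < K * K)%nat ->
  let c := INR N / (INR (K * K) - INR N) in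
  forall n, (1 <= n <= N)%nat ->
  (forall ps, In ps (Defs.dist K n) -> 0 <= fst ps /\ (0 < fst ps -> Inv K n (snd ps)))
  /\ Ex (fun _ => 1) (Defs.dist K n) = 1
  /\ Ex (fun s => exp (INR (sD s))) (Defs.dist K n) <= exp (2 * c * INR (n - 1)).
Proof.
  intros HK HN c.
  assert (HNr : INR N < INR (K * K)) by (apply lt_INR; auto).
  assert (c0 : 0 <= c) by (apply Rdiv_le_0_compat; [apply pos_INR|lra]).
  induction n as [|n IH]; intros Hn; [lia|].
  destruct n as [|n'].
  - simpl dist. split; [|split].
    + intros ps [<-|[]]. simpl. split; [lra|]. intros _.
      unfold Inv; simpl. split; [lia|]. split; [lia|]. split; [auto|]. split.
      * constructor; [simpl; tauto|constructor].
      * intros c' [<-|[]]; simpl; lia.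
    + unfold Ex; simpl; ring.
    + unfold Ex; simpl. rewrite Rmult_0_r, Rmult_1_l, Rplus_0_r; lra.
  - set (n := S n') in *.
    destruct (IH ltac:(lia)) as (Ha & Hb & Hc).
    assert (Hn' : (n < K * K)%nat) by lia.
    change (Defs.dist K (S n)) with (flat_map (fun ps : R * state => let (p, s) := ps in
          map (fun qs : R * state => let (q, s') := qs in (p * q, s')) (step K n s)) (Defs.dist K n)).
    split; [|split].
    + intros ps Hps. apply in_flat_map in Hps as [[p s] [Hin Hq]].
      apply in_map_iff in Hq as [[q s'] [<- Hq]]. simpl.
      destruct (Ha _ Hin) as [p0 pI]; simpl in p0, pI.
      destruct (Req_dec p 0) as [Ep|Ep].
      * subst p. rewrite Rmult_0_l. split; [lra|intros; lra].
      * assert (pp : 0 < p) by lra.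
        destruct (step_props K n s HK (pI pp) Hn') as [S1 _].
        destruct (S1 _ Hq) as [q0 qI]; simpl in q0, qI.
        split; [apply Rmult_le_pos; lra|]. intros Hpq. apply qI.
        destruct (Req_dec q 0) as [E|E]; [subst q; lra|lra].
    + rewrite Ex_bind. etransitivity; [|exact Hb]. rewrite Ex_FS. apply FS_eq.
      intros [p s] Hin. simpl fst; simpl snd. destruct (Ha _ Hin) as [p0 pI]; simpl in p0, pI.
      destruct (Req_dec p 0) as [Ep|Ep]; [subst; ring|].
      destruct (step_props K n s HK (pI ltac:(lra)) Hn') as [_ [S2 _]]. rewrite S2; ring.
    + rewrite Ex_bind.
      assert (qc : INR n / (INR (K * K) - INR n) <= c).
      { unfold c, Rdiv. assert (INR n <= INR N) by (apply le_INR; lia).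
        pose proof (pos_INR n).
        apply Rmult_le_compat; try lra.
        - left; apply Rinv_0_lt_compat; lra.
        - apply Rinv_le_contravar; lra. }
      apply Rle_trans with (FS (fun ps => (1 + 2 * c) * (fst ps * exp (INR (sD (snd ps))))) (Defs.dist K n)).
      * apply FS_le. intros [p s] Hin. simpl. destruct (Ha _ Hin) as [p0 pI]; simpl in p0, pI.
        destruct (Req_dec p 0) as [Ep|Ep]; [subst; lra|].
        destruct (step_props K n s HK (pI ltac:(lra)) Hn') as [_ [_ S3]].
        pose proof (exp_pos (INR (sD s))).
        assert (Ex (fun s0 => exp (INR (sD s0))) (step K n s) <= (1 + 2 * c) * exp (INR (sD s))).
        { eapply Rle_trans; [exact S3|]. rewrite Rmult_comm. apply Rmult_le_compat_r; lra. }
        replace ((1 + 2 * c) * (p * exp (INR (sD s)))) with (p * ((1 + 2 * c) * exp (INR (sD s)))) by ring.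
        apply Rmult_le_compat_l; lra.
      * rewrite FS_scale. change (FS _ (Defs.dist K n)) with (Ex (fun s => exp (INR (sD s))) (Defs.dist K n)).
        replace (S n - 1)%nat with (S (n - 1)) by lia. rewrite S_INR.
        replace (2 * c * (INR (n - 1) + 1)) with (2 * c + 2 * c * INR (n - 1)) by ring.
        rewrite exp_plus.
        assert (E0 : 0 <= Ex (fun s => exp (INR (sD s))) (Defs.dist K n)).
        { rewrite Ex_FS. apply Rle_trans with (FS (fun ps : R * state => 0 * fst ps) (Defs.dist K n)).
          - rewrite FS_scale; lra.
          - apply FS_le. intros [p s] Hin. destruct (Ha _ Hin) as [p0 _]; simpl in *.
            pose proof (exp_pos (INR (sD s))). nra. }
        pose proof (exp_ineq1_le (2 * c)).
        apply Rmult_le_compat; lra.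
Qed.

Lemma FS_plus {A : Type} (f g : A -> R) L : FS (fun x => f x + g x) L = FS f L + FS g L.
Proof. induction L; unfold FS in *; simpl; [ring|]. rewrite IHL; ring. Qed.

Lemma probD_Ex K n b : probD_lt K n b =
  Ex (fun s => if Rlt_dec (INR (sD s)) b then 1 else 0) (Defs.dist K n).
Proof.
  unfold probD_lt, Ex. generalize (Defs.dist K n). intros l; induction l as [|[p s] l IH]; simpl; auto.
  rewrite IH. destruct (Rlt_dec (INR (sD s)) b); ring.
Qed.

Lemma prob_bound K N b : (1 <= K)%nat -> (N < K * K)%nat -> (1 <= N)%nat ->
  Rabs (probD_lt K N b - 1) <= exp (2 * (INR N / (INR (K * K) - INR N)) * INR N - b).
Proof.
  intros HK HN HN1.
  destruct (dist_props K N HK HN N ltac:(lia)) as (Ha & Hb & Hc).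
  set (c := INR N / (INR (K * K) - INR N)) in *.
  rewrite probD_Ex.
  set (L := Defs.dist K N) in *.
  set (ind := fun s : state => if Rlt_dec (INR (sD s)) b then 1 else 0).
  assert (U : Ex ind L <= 1).
  { rewrite <- Hb. rewrite !Ex_FS. apply FS_le. intros [p s] Hin. destruct (Ha _ Hin) as [p0 _].
    simpl in *. unfold ind. destruct Rlt_dec; nra. }
  assert (Lo : 1 <= Ex ind L + exp (- b) * Ex (fun s => exp (INR (sD s))) L).
  { rewrite <- Hb. rewrite !Ex_FS, <- FS_scale, <- FS_plus. apply FS_le.
    intros [p s] Hin. destruct (Ha _ Hin) as [p0 _]. simpl in *. unfold ind.
    pose proof (exp_pos (INR (sD s))). pose proof (exp_pos (- b)).
    destruct Rlt_dec as [Hl|Hl].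
    - assert (0 <= exp (- b) * (p * exp (INR (sD s)))) by (apply Rmult_le_pos; [lra|apply Rmult_le_pos; lra]).
      lra.
    - replace (exp (- b) * (p * exp (INR (sD s)))) with (p * (exp (- b) * exp (INR (sD s)))) by ring.
      assert (1 <= exp (- b) * exp (INR (sD s))).
      { rewrite <- exp_plus. pose proof (exp_ineq1_le (- b + INR (sD s))). lra. }
      nra. }
  assert (Hc2 : exp (- b) * Ex (fun s => exp (INR (sD s))) L <= exp (2 * c * INR N - b)).
  { replace (2 * c * INR N - b) with (- b + 2 * c * INR N) by ring. rewrite exp_plus.
    apply Rmult_le_compat_l; [left; apply exp_pos|].
    eapply Rle_trans; [exact Hc|].
    assert (c0 : 0 <= c) by (unfold c; apply Rdiv_le_0_compat; [apply pos_INR|];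
      assert (INR N < INR (K * K)) by (apply lt_INR; auto); lra).
    rewrite minus_INR by lia. simpl.
    assert (2 * c * (INR N - 1) <= 2 * c * INR N) by nra.
    destruct H as [H|H]; [left; apply exp_increasing; auto|rewrite H; lra]. }
  unfold Rabs; destruct Rcase_abs; lra.
Qed.

Lemma Rpower_big b M : 0 < b -> exists N0, forall K, (N0 <= K)%nat -> M <= Rpower (INR K) b.
Proof.
  intros Hb. set (T := exp (Rabs M / b)).
  destruct (INR_archimed 1 T) as [N0 HN0]; [lra|].
  exists N0. intros K HK.
  assert (INR N0 <= INR K) by (apply le_INR; auto).
  assert (Tp : 0 < T) by apply exp_pos.
  assert (ln T < ln (INR K)) by (apply ln_increasing; lra).
  unfold T in H0; rewrite ln_exp in H0.
  assert (b * (Rabs M / b) < b * ln (INR K)) by (apply Rmult_lt_compat_l; auto).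
  replace (b * (Rabs M / b)) with (Rabs M) in H1 by (field; lra).
  unfold Rpower. pose proof (exp_ineq1_le (b * ln (INR K))).
  pose proof (Rle_abs M). lra.
Qed.

Theorem lemma6p3 (alpha : R) (Ha : 0 < alpha < 1) :
  Un_cv (fun K : nat => probD_lt K (tK alpha K) (6 * Rpower (INR K) (2 * alpha))) 1.
Proof.
  intros eps Heps.
  destruct (Rpower_big alpha (Rabs (ln eps) + 1) ltac:(lra)) as [N1 H1].
  destruct (Rpower_big (1 - alpha) 2 ltac:(lra)) as [N2 H2].
  exists (max (max N1 N2) 2). intros K HK. unfold R_dist.
  specialize (H1 K ltac:(lia)). specialize (H2 K ltac:(lia)).
  assert (K2 : 2 <= INR K) by (apply (le_INR 2); lia).
  set (u := Rpower (INR K) alpha) in *.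
  assert (up : 0 < u) by (unfold u, Rpower; apply exp_pos).
  assert (eK1 : INR K = u * Rpower (INR K) (1 - alpha)).
  { unfold u; rewrite <- Rpower_plus. replace (alpha + (1 - alpha)) with 1 by ring.
    rewrite Rpower_1; lra. }
  assert (Ku : 2 * u <= INR K) by nra.
  assert (e2a : Rpower (INR K) (2 * alpha) = u * u).
  { unfold u; rewrite <- Rpower_plus. f_equal; ring. }
  assert (e1a : Rpower (INR K) (1 + alpha) = INR K * u).
  { unfold u; rewrite Rpower_plus, Rpower_1; lra. }
  rewrite e2a.
  set (N := tK alpha K).
  assert (u1 : 1 <= u) by (pose proof (Rabs_pos (ln eps)); lra).
  set (x := INR K * u).
  assert (x2 : 2 <= x) by (unfold x; nra).
  destruct (base_Int_part x) as [B1 B2].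
  assert (I0 : (0 <= Int_part x)%Z).
  { assert (-1 < Int_part x)%Z by (apply lt_IZR; lra). lia. }
  assert (eN : INR N = IZR (Int_part x)).
  { unfold N, tK. rewrite e1a. fold x. rewrite INR_IZR_INZ, Z2Nat.id; auto. }
  assert (N1' : (1 <= N)%nat).
  { assert (INR 0 < INR N) by (simpl; lra). apply INR_lt in H. lia. }
  assert (eKK : INR (K * K) = INR K * INR K) by apply mult_INR.
  assert (ex : x = INR K * u) by reflexivity.
  clearbody x N u.
  set (z := IZR (Int_part x)) in *. clearbody z.
  assert (NKK : (N < K * K)%nat).
  { apply INR_lt. rewrite eKK, eN. rewrite ex in B1.
    assert (uK : u < INR K) by (clear - Ku up; lra).
    assert (INR K * u < INR K * INR K) by (apply Rmult_lt_compat_l; clear - uK K2; lra). lra. }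
  assert (Nx : INR N <= INR K * u) by (rewrite eN; rewrite ex in B1; lra).
  pose proof (prob_bound K N (6 * (u * u)) ltac:(lia) NKK N1') as PB.
  eapply Rle_lt_trans; [exact PB|].
  rewrite <- (exp_ln eps) by auto. apply exp_increasing.
  set (Dd := INR (K * K) - INR N).
  assert (Ddb : INR K * INR K / 2 <= Dd).
  { unfold Dd; rewrite eKK. assert (INR K * u <= INR K * (INR K / 2)) by (apply Rmult_le_compat_l; lra). lra. }
  assert (Ddp : 0 < Dd) by nra.
  assert (N0 : 0 <= INR N) by apply pos_INR.
  assert (Q : 2 * (INR N / Dd) * INR N <= 4 * (u * u)).
  { apply (Rmult_le_reg_r Dd); auto.
    replace (2 * (INR N / Dd) * INR N * Dd) with (2 * (INR N * INR N)) by (field; lra).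
    assert (INR N * INR N <= (INR K * u) * (INR K * u)) by nra.
    nra. }
  assert (-2 * (u * u) < ln eps).
  { pose proof (Rabs_pos (ln eps)). pose proof (Rle_abs (- ln eps)). rewrite Rabs_Ropp in H0. nra. }
  lra.
Qed.
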